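(* For integers $n\ge 2$ let $F_{2,n}(q)=(q-1)^{n-1}+(q-2)^n\in\mathbb{Z}[q]$. Then for every integer $k\ge 1$, the polynomial $F_{2,2}(q)$ divides $F_{2,6k+2}(q)$.
   Context: $F_{2,n}(q)$ is the factor satisfying $P_{K_{2,n}}(q)=q(q-1)F_{2,n}(q)$, where $P_{K_{2,n}}$ is the chromatic polynomial of the complete bipartite graph $K_{2,n}$. *)

(* Defs.v *)
From mathcomp Require Import all_boot all_algebra.
Set Implicit Arguments. Unset Strict Implicit. Unset Printing Implicit Defensive.
Import GRing.Theory.
Local Open Scope ring_scope.

Definition F2 (n : nat) : {poly int} :=
  ('X - 1) ^+ n.-1 + ('X - 2%:P) ^+ n.

(* Main.v *)
Require Import Defs.
From mathcomp Require Import all_boot all_algebra ring zify.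
Import GRing.Theory.
Local Open Scope ring_scope.
Lemma two : (2%:P : {poly int}) = 2.
Proof. by rewrite -[2]/(2%:R) polyC_natr. Qed.
Lemma powmod (a r p : {poly int}) m : exists c, (a + r * p) ^+ m = a ^+ m + c * p.
Proof.
elim: m => [|m [c IH]]; first by exists 0; rewrite !expr0 mul0r addr0.
exists (a ^+ m * r + c * a + c * r * p); rewrite !exprS IH; ring.
Qed.
Theorem proposition4 (k : nat) : (1 <= k)%N ->
  exists r : {poly int}, F2 (6 * k + 2) = r * F2 2.
Proof.
move=> _; set p := F2 2.
have hx : ('X - 1) ^+ 3 = -1 + 'X * p by rewrite /p /F2 two /=; ring.
have hy : ('X - 2%:P) ^+ 2 = - ('X - 1) + 1 * p by rewrite /p /F2 two /=; ring.
have hnx : (- ('X - 1)) ^+ 3 = 1 + (- 'X) * p :> {poly int} by rewrite /p /F2 two /=; ring.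
have [c1 H1] := powmod (-1) 'X p (2 * k).
have [c2 H2] := powmod (- ('X - 1)) 1 p (3 * k + 1).
have [c3 H3] := powmod 1 (- 'X) p k.
exists (c1 * ('X - 1) - ('X - 1) * c3 + c2).
rewrite /F2 addn2 /=.
have -> : ((6 * k).+1 = 3 * (2 * k) + 1)%N by lia.
rewrite exprD exprM hx H1.
have -> : ((3 * (2 * k) + 1).+1 = 2 * (3 * k + 1))%N by lia.
rewrite (exprM (-1)) sqrrN expr1n expr1n exprM hy H2 exprD exprM hnx H3 expr1n.
ring.
Qed.
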